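(* Let $d\in\mathbb{N}$. For every $n\ge 2d$ and $\ell\in\mathbb{N}$, viewing cones of symmetric forms as subsets of $\mathbb{R}^{\pi(2d)}$ via coefficients in the bases $\{p^{(m)}_\lambda:\lambda\vdash 2d\}$, we have $\mathcal{P}^S_{\ell n,2d}\subseteq\mathcal{P}^S_{n,2d}$. That is, if $(c_\lambda)$ is such that $\sum_\lambda c_\lambda p^{(\ell n)}_\lambda$ is nonnegative on $\mathbb{R}^{\ell n}$, then $\sum_\lambda c_\lambda p^{(n)}_\lambda$ is nonnegative on $\mathbb{R}^n$.
   Context: $p_i^{(m)}=\frac1m(x_1^i+\dots+x_m^i)$, $p^{(m)}_\lambda=\prod_i p^{(m)}_{\lambda_i}$ for a partition $\lambda$; $\pi(2d)$ is the number of partitions of $2d$; for $m\ge 2d$, $\{p^{(m)}_\lambda:\lambda\vdash 2d\}$ is a basis of the space of symmetric forms of degree $2d$ in $m$ variables. $\mathcal{P}^S_{m,2d}$ is the cone of nonnegative symmetric forms of degree $2d$ in $m$ variables. *)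

(* Defs.v *)
From HB Require Import structures.
From mathcomp Require Import all_boot all_order all_algebra.
From mathcomp Require Import reals.
Set Implicit Arguments. Unset Strict Implicit. Unset Printing Implicit Defensive.
Import Order.TTheory GRing.Theory Num.Theory.
Local Open Scope ring_scope.

Definition is_partition (k : nat) (la : seq nat) : bool :=
  [&& sorted geq la, all (fun i => 0 < i)%N la & sumn la == k].

(* The (finite, duplicate-free) list of all partitions of k: every partition of
   k has at most k parts, each at most k, so it arises from some k-tuple with
   entries in 'I_(k.+1) by deleting zeros. *)
Definition partitions (k : nat) : seq (seq nat) :=
  undup [seq la <- [seq [seq i <- map val (tval t) | (0 < i)%N]
                    | t : k.-tuple 'I_k.+1] | is_partition k la].

Definition psum {R : realType} (m : nat) (i : nat) (x : 'I_m -> R) : R :=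
  (m%:R)^-1 * \sum_(j < m) x j ^+ i.

Definition ppart {R : realType} (m : nat) (la : seq nat) (x : 'I_m -> R) : R :=
  \prod_(i <- la) psum i x.

Definition symform {R : realType} (k : nat) (c : seq nat -> R) (m : nat)
  (x : 'I_m -> R) : R :=
  \sum_(la <- partitions k) c la * ppart la x.

Definition nonneg_form {R : realType} (k : nat) (c : seq nat -> R) (m : nat) : Prop :=
  forall x : 'I_m -> R, 0 <= symform k c x.

(* Main.v *)
Require Import Defs.
From HB Require Import structures.
From mathcomp Require Import all_boot all_order all_algebra.
From mathcomp Require Import reals.
Import Order.TTheory GRing.Theory Num.Theory.
Local Open Scope ring_scope.

Lemma sum_rep (R : realType) (n' l i : nat) (x : 'I_n'.+1 -> R) :
  \sum_(j < l * n'.+1) x (inord (j %% n'.+1)) ^+ i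
  = l%:R * \sum_(j < n'.+1) x j ^+ i.
Proof.
set G := fun k : nat => x (inord (k %% n'.+1)) ^+ i.
have -> : \sum_(j < l * n'.+1) x (inord (j %% n'.+1)) ^+ i
        = \sum_(0 <= j < l * n'.+1) G j by rewrite big_mkord.
have H0 : \sum_(0 <= j < n'.+1) G j = \sum_(j < n'.+1) x j ^+ i.
  rewrite big_mkord; apply: eq_bigr => j _; rewrite /G modn_small //.
  by rewrite inord_val.
elim: l => [|l IH]; first by rewrite mul0n big_geq // mul0r.
rewrite mulSn (big_cat_nat _ (n := n'.+1)) //=; last by rewrite leq_addr.
rewrite H0.
have -> : \sum_(n'.+1 <= j < n'.+1 + l * n'.+1) G j = \sum_(0 <= j < l * n'.+1) G j.
  have := big_addn 0 (l * n'.+1 + n'.+1) n'.+1 xpredT G.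
  rewrite add0n addnK addnC => ->.
  by apply: eq_bigr => j _; rewrite /G modnDr.
by rewrite IH -nat1r mulrDl mul1r.
Qed.

Theorem proposition3p5 (R : realType) (d n l : nat) :
  (2 * d <= n)%N -> (0 < l)%N ->
  forall c : seq nat -> R,
    nonneg_form (2 * d) c (l * n) -> nonneg_form (2 * d) c n.
Proof.
move=> _ l0 c H x.
case: n x H => [|n'] x H.
  rewrite (_ : symform (2 * d) c x = symform (2 * d) c (fun _ : 'I_(l * 0) => 0)); first exact: H.
  rewrite /symform; apply: eq_bigr => la _; congr (_ * _).
  rewrite /ppart; apply: eq_bigr => i _.
  rewrite /psum big_ord0 mulr0 big1 ?mulr0 // => -[j]; by rewrite muln0 ltn0.
rewrite (_ : symform (2 * d) c x = symform (2 * d) c (fun j : 'I_(l * n'.+1) => x (inord (j %% n'.+1)))); first exact: H.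
rewrite /symform; apply: eq_bigr => la _; congr (_ * _).
rewrite /ppart; apply: eq_bigr => i _.
rewrite /psum sum_rep natrM invfM mulrACA mulVf ?mul1r //.
by rewrite pnatr_eq0 -lt0n.
Qed.
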